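(* Let $V$ be a finite nonempty set and $f:\{0,1\}^V\to\{0,1\}^V$. (1) If the asynchronous state graph $\Gamma(f)$ has at least two attractors, then $f$ has a 2-critical subnetwork. (2) If $f$ is non-expansive and $\Gamma(f)$ has a cyclic attractor, then $f$ has no fixed point, and hence $f$ has a 0-critical subnetwork.
   Context: $e_i$ is the point of $\{0,1\}^V$ whose only $1$ is at component $i$; $\oplus$ is componentwise addition mod 2; $d$ is the Hamming distance; $f$ is non-expansive if $d(f(x),f(y))\le d(x,y)$ for all $x,y$. $\Gamma(f)$ is the digraph on $\{0,1\}^V$ with an arc $x\to x\oplus e_i$ whenever $f_i(x)\neq x_i$. Attractors are the terminal strongly connected components of $\Gamma(f)$; an attractor is cyclic if it contains at least two points. For nonempty $I\subseteq V$ and $z\in\{0,1\}^{V\setminus I}$, the subnetwork of $f$ induced by $z$ is $h:\{0,1\}^I\to\{0,1\}^I$ with $h(x|_I)=f(x)|_I$ for all $x$ whose restriction to $V\setminus I$ is $z$ ($f$ is a subnetwork of itself); a strict subnetwork is one different from the network. A network is 2-critical if it has at least two fixed points and each of its strict subnetworks has at most one fixed point; 0-critical if it has no fixed point and each of its strict subnetworks has at least one fixed point. *)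

(* Defs.v *)
From mathcomp Require Import all_boot.
Set Implicit Arguments. Unset Strict Implicit. Unset Printing Implicit Defensive.

Section BN.
Variable W : finType.

Definition conf := {ffun W -> bool}.
Definition network := conf -> conf.

Definition flip (x : conf) (i : W) : conf := [ffun j => if j == i then ~~ x j else x j].

Definition hamming (x y : conf) : nat := #|[set i | x i != y i]|.
Definition non_expansive (f : network) : Prop :=
  forall x y, hamming (f x) (f y) <= hamming x y.

Definition async_arc (f : network) : rel conf :=
  fun x y => [exists i, (f x i != x i) && (y == flip x i)].

Definition scc (f : network) (x : conf) : {set conf} :=
  [set y | connect (async_arc f) x y && connect (async_arc f) y x].

Definition attractor (f : network) (A : {set conf}) : Prop :=
  (exists x, A = scc f x) /\
  (forall y z, y \in A -> async_arc f y z -> z \in A).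

Definition cyclic_attractor (f : network) (A : {set conf}) : Prop :=
  attractor f A /\ 2 <= #|A|.

Definition fixed_points (f : network) : {set conf} := [set x | f x == x].

End BN.

Definition subV (W : finType) (I : {set W}) : finType := {i : W | i \in I}.

Definition glue (W : finType) (I : {set W}) (y : conf (subV I)) (z : conf W)
  : conf W :=
  [ffun i => if insub i is Some j then y j else z i].

(* subnetwork of f induced by (the restriction to W\I of) z *)
Definition subnet (W : finType) (f : network W) (I : {set W}) (z : conf W)
  : network (subV I) :=
  fun y => [ffun j => f (glue y z) (val j)].
Arguments subnet [W] f I z _.

(* strict subnetworks of g are those on a nonempty proper subset J of W *)
Definition two_critical (W : finType) (g : network W) : Prop :=
  2 <= #|fixed_points g| /\
  (forall (J : {set W}) (z : conf W), J != set0 -> J \proper setT ->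
     #|fixed_points (subnet g J z)| <= 1).

Definition zero_critical (W : finType) (g : network W) : Prop :=
  #|fixed_points g| = 0 /\
  (forall (J : {set W}) (z : conf W), J != set0 -> J \proper setT ->
     1 <= #|fixed_points (subnet g J z)|).

Definition has_subnet_with (W : finType) (f : network W)
  (P : forall U : finType, network U -> Prop) : Prop :=
  exists (I : {set W}) (z : conf W), I != set0 /\ P (subV I) (subnet f I z).

(* Main.v *)
Require Import Defs.
From mathcomp Require Import all_boot.
From Stdlib Require Import Classical.
Set Implicit Arguments. Unset Strict Implicit. Unset Printing Implicit Defensive.

Section Transfer.
Variables (V : finType) (f : network V) (I : {set V}) (z : conf V)
  (J : {set subV I}) (z' : conf (subV I)).

Definition I' : {set V} := val @: J.
Definition z'' : conf V := glue z' z.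
Definition wof (p : conf (subV J)) : conf V := glue (glue p z') z.
Definition lift (p : conf (subV J)) : conf (subV I') := [ffun k => wof p (val k)].

Lemma wof_val (p : conf (subV J)) (j : subV J) : wof p (val (val j)) = p j.
Proof.
rewrite /wof /glue !ffunE.
case: insubP => [u Hu Hv|]; last by rewrite (valP (val j)).
move/val_inj: Hv => ->; rewrite ffunE.
case: insubP => [u' Hu' Hv'|]; last by rewrite (valP j).
by move/val_inj: Hv' => ->.
Qed.

Lemma glue_lift (p : conf (subV J)) : glue (lift p) z'' = wof p.
Proof.
apply/ffunP => i; rewrite /glue /z'' ffunE.
case: insubP => [k Hk <-|Hn]; first by rewrite ffunE.
rewrite /wof /glue !ffunE.
case: insubP => [u Hu Hv|//]; rewrite ffunE.
case: insubP => [u' Hu' Hv'|//].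
exfalso; move/negP: Hn; apply; rewrite /I' -Hv -Hv'.
by apply: imset_f; apply: (valP u').
Qed.

Lemma lift_fixed (p : conf (subV J)) :
  (p \in fixed_points (subnet (subnet f I z) J z')) =
  (lift p \in fixed_points (subnet f I' z'')).
Proof.
rewrite !inE; apply/eqP/eqP => H.
- apply/ffunP => k; rewrite ffunE glue_lift ffunE.
  have /imsetP [j Hj Hk] := valP k.
  have := congr1 (fun g : conf (subV J) => g (Sub j Hj : subV J)) H.
  rewrite ffunE /= ffunE => E; have E2 := wof_val p (Sub j Hj); rewrite /= in E2.
  have -> : sval k = val j by exact: Hk.
  rewrite /wof E -E2 /wof /=; done.
- apply/ffunP => j; rewrite ffunE /= ffunE.
  have Hj : val (val j) \in I' by apply: imset_f; apply: (valP j).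
  have := congr1 (fun g : conf (subV I') => g (Sub (val (val j)) Hj : subV I')) H.
  rewrite !ffunE glue_lift !SubK -(wof_val p j) => E.
  by rewrite /wof in E *; rewrite E /glue ffunE.
Qed.

Lemma lift_inj : injective lift.
Proof.
move=> p q H; apply/ffunP => j.
have Hj : val (val j) \in I' by apply: imset_f; apply: (valP j).
have := congr1 (fun g : conf (subV I') => g (Sub (val (val j)) Hj : subV I')) H.
by rewrite [lift p _]ffunE [lift q _]ffunE !SubK !wof_val.
Qed.

Lemma lift_surj (q : conf (subV I')) : exists p, q = lift p.
Proof.
exists [ffun j : subV J => glue q z'' (val (val j))].
apply/ffunP => k; rewrite ffunE.
have /imsetP [j Hj Hk] := valP k.
rewrite Hk (wof_val _ (Sub j Hj : subV J)) ffunE /= /glue ffunE.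
case: insubP => [k' Hk' Hv|]; last by rewrite -Hk (valP k).
by congr (q _); apply: val_inj; rewrite Hv Hk.
Qed.

Lemma card_transfer :
  #|fixed_points (subnet (subnet f I z) J z')| = #|fixed_points (subnet f I' z'')|.
Proof.
rewrite -(card_imset _ lift_inj); apply: eq_card => q; have [p ->] := lift_surj q.
by rewrite (mem_imset _ _ lift_inj) lift_fixed.
Qed.

Lemma I'_card : J \proper setT -> #|I'| < #|I|.
Proof.
move=> HJ; rewrite /I' card_imset; last exact: val_inj.
apply: (leq_trans (proper_card HJ)).
by rewrite cardsT card_sig; apply: subset_leq_card; apply/subsetP => x; rewrite inE.
Qed.

Lemma I'_nonempty : J != set0 -> I' != set0.
Proof. by rewrite /I' -!card_gt0 card_imset //; apply: val_inj. Qed.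

End Transfer.

Lemma min_ex (T : Type) (m : T -> nat) (P : T -> Prop) :
  (exists a, P a) -> exists a, P a /\ forall b, m b < m a -> ~ P b.
Proof.
move=> [a Ha].
have : forall n a, m a <= n -> P a -> exists a, P a /\ forall b, m b < m a -> ~ P b.
  elim=> [|n IH] a0 Hm Ha0.
  - by exists a0; split=> // b; rewrite leqn0 in Hm; rewrite (eqP Hm).
  - case: (classic (exists b, m b < m a0 /\ P b)) => [[b [Hb Pb]]|Hn].
    + by apply: (IH b) => //; rewrite -ltnS (leq_trans Hb Hm).
    + by exists a0; split=> // b Hb Pb; apply: Hn; exists b.
by move=> H; exact: (H _ a (leqnn _) Ha).
Qed.

Lemma two_crit_min (V : finType) (f : network V) :
  (exists I z, I != set0 /\ 1 < #|fixed_points (subnet f I z)|) ->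
  has_subnet_with f two_critical.
Proof.
move=> Hex.
have [I [[z [HI Hz]] Hmin]] :=
  @min_ex _ (fun I : {set V} => #|I|)
    (fun I => exists z, I != set0 /\ 1 < #|fixed_points (subnet f I z)|)
    Hex.
exists I, z; split=> //; split=> // J z' HJ HJp.
rewrite leqNgt; apply/negP => H2.
apply: (Hmin (I' J) (I'_card HJp)).
exists (z'' z z'); split; first exact: I'_nonempty.
by rewrite -card_transfer.
Qed.

Lemma zero_crit_min (V : finType) (f : network V) :
  (exists I z, I != set0 /\ #|fixed_points (subnet f I z)| = 0) ->
  has_subnet_with f zero_critical.
Proof.
move=> Hex.
have [I [[z [HI Hz]] Hmin]] :=
  @min_ex _ (fun I : {set V} => #|I|)
    (fun I => exists z, I != set0 /\ #|fixed_points (subnet f I z)| = 0)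
    Hex.
exists I, z; split=> //; split=> // J z' HJ HJp.
rewrite lt0n; apply/negP => /eqP H2.
apply: (Hmin (I' J) (I'_card HJp)).
exists (z'' z z'); split; first exact: I'_nonempty.
by rewrite -card_transfer.
Qed.

Section Graph.
Variables (V : finType) (f : network V).

Lemma hamming_sym (x y : conf V) : hamming x y = hamming y x.
Proof. by apply: eq_card => i; rewrite !inE eq_sym. Qed.

Lemma hamming_flip (x y : conf V) i : x i != y i -> hamming (flip x i) y < hamming x y.
Proof.
move=> Hi; rewrite /hamming (cardsD1 i [set j | x j != y j]) inE Hi add1n ltnS.
rewrite leq_eqVlt; apply/orP; left; apply/eqP; apply: eq_card => j.
rewrite !inE ffunE; case: (eqVneq j i) => [->|Hji] /=; last by [].
by move: Hi; case: (x i); case: (y i).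
Qed.

Lemma arc_flip (x : conf V) i : f x i != x i -> async_arc f x (flip x i).
Proof. by move=> H; apply/existsP; exists i; rewrite H eqxx. Qed.

Lemma attr_closed A (y z : conf V) : attractor f A -> y \in A -> connect (async_arc f) y z -> z \in A.
Proof.
move=> [_ HA] Hy /connectP [p Hp ->]; elim: p y Hy Hp => [|a p IH] y Hy //=.
by move/andP=> [Ha Hp]; apply: (IH a) => //; apply: (HA y).
Qed.

Lemma attr_self (a : conf V) : a \in scc f a.
Proof. by rewrite inE connect0. Qed.

Lemma attr_eq A x : attractor f A -> x \in A -> A = scc f x.
Proof.
move=> [[a ->] _]; rewrite inE => /andP [Hax Hxa].
apply/setP => y; rewrite !inE; apply/andP/andP => [[H1 H2]|[H1 H2]]; split.
- exact: connect_trans Hxa H1.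
- exact: connect_trans H2 Hax.
- exact: connect_trans Hax H1.
- exact: connect_trans H2 Hxa.
Qed.

Lemma fixed_noarc (x y : conf V) : f x = x -> connect (async_arc f) x y -> y = x.
Proof.
move=> Hx /connectP [[|a p] Hp ->] //=.
move: Hp => /= /andP [/existsP [i /andP [Hi _]] _].
by rewrite Hx eqxx in Hi.
Qed.

Lemma reach_fixed (xs : conf V) : non_expansive f -> f xs = xs ->
  forall y, exists x, connect (async_arc f) y x /\ f x = x.
Proof.
move=> Hne Hxs.
have : forall n y, hamming y xs <= n -> exists x, connect (async_arc f) y x /\ f x = x.
  elim=> [|n IH] y Hy.
  - exists y; split=> //; rewrite leqn0 cards_eq0 in Hy.
    have Eyx : y = xs.
      apply/ffunP => i; apply/eqP; apply: negbNE; apply/negP => Hi.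
      by have := eqP Hy; move/setP/(_ i); rewrite !inE Hi.
    by rewrite Eyx.
  - case: (boolP [exists i, (f y i != y i) && (y i != xs i)]).
    + move/existsP=> [i /andP [H1 H2]].
      have [x [Hc Hx]] : exists x, connect (async_arc f) (flip y i) x /\ f x = x.
        apply: IH; rewrite -ltnS; apply: leq_trans Hy; exact: hamming_flip.
      exists x; split=> //; apply: connect_trans Hc; apply: connect1; exact: arc_flip.
    + rewrite negb_exists => /forallP Hn.
      exists y; split=> //.
      have Hsub : [set i | y i != xs i] \subset [set i | f y i != xs i].
        apply/subsetP => i; rewrite !inE => Hi.
        have := Hn i; rewrite Hi andbT negbK => /eqP ->; exact: Hi.
      have Heq : [set i | y i != xs i] = [set i | f y i != xs i].
        apply/eqP; rewrite eqEcard Hsub /=.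
        have := Hne y xs; rewrite Hxs; done.
      apply/ffunP => i; apply/eqP; apply: negbNE; apply/negP => Hi.
      have := Hn i; rewrite Hi /= => Hyx.
      have : i \in [set i | f y i != xs i].
        by rewrite inE; move: Hi Hyx; case: (f y i); case: (y i); case: (xs i).
      by rewrite -Heq inE (negbTE Hyx).
by move=> H y; exact: (H _ y (leqnn _)).
Qed.

End Graph.

Theorem proposition2 (V : finType) (f : network V) :
  0 < #|V| ->
  ((exists A B : {set conf V}, [/\ attractor f A, attractor f B & A != B]) ->
     has_subnet_with f two_critical) /\
  (non_expansive f -> (exists A, cyclic_attractor f A) ->
     fixed_points f = set0 /\ has_subnet_with f zero_critical).
Proof.
move=> HV; split.
- move=> [A [B [HA HB HAB]]].
  have Hex : exists p : conf V * conf V, p.1 \in A /\ p.2 \in B.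
    have [[a Ea] _] := HA; have [[b Eb] _] := HB.
    by exists (a, b); rewrite Ea Eb !attr_self.
  have [[x y] [[/= Hx Hy] Hmin]] := @min_ex _ (fun p : conf V * conf V => hamming p.1 p.2)
    (fun p => p.1 \in A /\ p.2 \in B) Hex.
  have Hxy : x != y.
    apply/negP => /eqP Exy; move/negP: HAB; apply; apply/eqP.
    by rewrite (attr_eq HA Hx) (attr_eq HB Hy) Exy.
  have fx : forall i, x i != y i -> f x i = x i.
    move=> i Hi; apply/eqP; apply: negbNE; apply/negP => Hf.
    apply: (Hmin (flip x i, y)); first exact: hamming_flip.
    split=> //=; apply: (attr_closed HA Hx); apply: connect1; exact: arc_flip.
  have fy : forall i, x i != y i -> f y i = y i.
    move=> i Hi; apply/eqP; apply: negbNE; apply/negP => Hf.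
    apply: (Hmin (x, flip y i)).
      by rewrite /= hamming_sym (hamming_sym x y); apply: hamming_flip; rewrite eq_sym.
    split=> //=; apply: (attr_closed HB Hy); apply: connect1; exact: arc_flip.
  have [i0 Hi0] : exists i, x i != y i.
    apply: NNPP => H; move/negP: Hxy; apply; apply/eqP/ffunP => i.
    apply/eqP; apply: negbNE; apply/negP => Hi; apply: H; by exists i.
  set I := [set i | x i != y i].
  apply: two_crit_min; exists I, x; split.
    by apply/set0Pn; exists i0; rewrite inE.
  pose px := [ffun k : subV I => x (val k)].
  pose py := [ffun k : subV I => y (val k)].
  have gx : glue px x = x.
    apply/ffunP => i; rewrite /glue ffunE.
    by case: insubP => [k _ <-|_]; first rewrite ffunE.
  have gy : glue py x = y.
    apply/ffunP => i; rewrite /glue ffunE.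
    case: insubP => [k _ <-|Hn]; first by rewrite ffunE.
    by move: Hn; rewrite inE negbK => /eqP.
  apply/card_gt1P; exists px, py; split.
  + rewrite inE; apply/eqP/ffunP => k; rewrite ffunE gx ffunE; apply: fx.
    by have := valP k; rewrite inE.
  + rewrite inE; apply/eqP/ffunP => k; rewrite ffunE gy ffunE; apply: fy.
    by have := valP k; rewrite inE.
  + have [i Hi] : exists i, i \in I.
      by exists i0; rewrite inE.
    apply/negP => /eqP /(congr1 (fun g : conf (subV I) => g (Sub i Hi))).
    by rewrite !ffunE !SubK => E; move: Hi; rewrite inE E eqxx.
- move=> Hne [A [HA HA2]].
  have Hfix : fixed_points f = set0.
    apply/setP => xs; rewrite inE in_set0; apply/negP => /eqP Hxs.
    have [[a Ea] _] := HA.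
    have aA : a \in A by rewrite Ea attr_self.
    have [x [Hc Hx]] := reach_fixed Hne Hxs a.
    have xA : x \in A := attr_closed HA aA Hc.
    have : A \subset [set x].
      apply/subsetP => y; rewrite (attr_eq HA xA) !inE => /andP [Hxy _].
      by rewrite (fixed_noarc Hx Hxy).
    move/subset_leq_card; rewrite cards1 => H1.
    by have := leq_trans HA2 H1.
  split=> //; apply: zero_crit_min.
  exists setT, [ffun _ => false]; split.
    by rewrite -card_gt0 cardsT.
  apply/eqP; rewrite cards_eq0; apply/eqP/setP => p; rewrite in_set0 inE.
  apply/negP => /eqP Hp.
  suff : glue p [ffun _ => false] \in fixed_points f by rewrite Hfix in_set0.
  rewrite inE; apply/eqP/ffunP => i.
  have := congr1 (fun g : conf (subV [set: V]) => g (Sub i (in_setT i))) Hp.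
  rewrite ffunE SubK => ->.
  rewrite [RHS]ffunE; case: insubP => [k _ Hk|]; last by rewrite in_setT.
  by congr (p _); apply: val_inj; rewrite Hk.
Qed.
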